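(* Let $n,p$ be positive integers, $X\in\mathbb{R}^{n\times p}$, $\mathbf y\in\mathbb{R}^n$, $\delta>0$ and $\lambda>0$. The function \[ f_\lambda(\mathbf t)=\frac1n\|\mathbf y-X_{\mathbf t}\widetilde{\boldsymbol\beta}_{\mathbf t}\|_2^2+\lambda\sum_{j=1}^p t_j,\qquad \mathbf t\in[0,1]^p, \] is continuous over $[0,1]^p$ in the sense that for any sequence $\mathbf t^{(1)},\mathbf t^{(2)},\dots\in[0,1)^p$ converging to some $\mathbf t\in[0,1]^p$, the limit $\lim_{l\to\infty}f_\lambda(\mathbf t^{(l)})$ exists and equals $f_\lambda(\mathbf t)$.
   Context: For $\mathbf t\in[0,1]^p$, $T_{\mathbf t}=\mathrm{Diag}(t_1,\dots,t_p)$, $X_{\mathbf t}=XT_{\mathbf t}$, $L_{\mathbf t}=\frac1n[X_{\mathbf t}^\top X_{\mathbf t}+\delta(I-T_{\mathbf t}^2)]$ with $I$ the $p\times p$ identity, and $\widetilde{\boldsymbol\beta}_{\mathbf t}:=L_{\mathbf t}^{+}\left(X_{\mathbf t}^\top\mathbf y/n\right)$ with $L_{\mathbf t}^+$ the Moore–Penrose pseudo-inverse of $L_{\mathbf t}$. *)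

(* Defs.v *)
From HB Require Import structures.
From mathcomp Require Import all_boot all_order all_algebra.
From mathcomp Require Import all_classical all_reals all_analysis.
Set Implicit Arguments. Unset Strict Implicit. Unset Printing Implicit Defensive.
Import Order.TTheory GRing.Theory Num.Theory.
Local Open Scope ring_scope.
Local Open Scope classical_set_scope.

Section Defs.
Variables (R : realType) (p : nat).

Definition is_MP_pinv (A B : 'M[R]_p) : Prop :=
  [/\ A *m B *m A = A, B *m A *m B = B,
      (A *m B)^T = A *m B & (B *m A)^T = B *m A].

(* The Moore--Penrose pseudo-inverse (it exists and is unique). *)
Definition MP_pinv (A : 'M[R]_p) : 'M[R]_p := xget 0 (is_MP_pinv A).
End Defs.

Section Model.
Variables (R : realType) (n p : nat).
Variables (X : 'M[R]_(n, p)) (y : 'cV[R]_n) (delta lambda : R).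

Definition Tmat (t : 'rV[R]_p) : 'M[R]_p := diag_mx t.
Definition Xt (t : 'rV[R]_p) : 'M[R]_(n, p) := X *m Tmat t.
Definition Lt (t : 'rV[R]_p) : 'M[R]_p :=
  (n%:R)^-1 *: ((Xt t)^T *m Xt t + delta *: (1%:M - Tmat t *m Tmat t)).
Definition beta_t (t : 'rV[R]_p) : 'cV[R]_p :=
  MP_pinv (Lt t) *m ((n%:R)^-1 *: ((Xt t)^T *m y)).
Definition sqnorm2 m (v : 'cV[R]_m) : R := \sum_(i < m) (v i 0) ^+ 2.
Definition f_lambda (t : 'rV[R]_p) : R :=
  (n%:R)^-1 * sqnorm2 (y - Xt t *m beta_t t) + lambda * \sum_(j < p) t 0 j.
End Model.

(* Main.v *)
From HB Require Import structures.
From mathcomp Require Import all_boot all_order all_algebra.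
From mathcomp Require Import all_classical all_reals all_analysis.
From mathcomp Require Import ring lra.
Require Import Defs.
Import Order.TTheory GRing.Theory Num.Theory.
Import numFieldNormedType.Exports.
Local Open Scope ring_scope.
Local Open Scope classical_set_scope.

Section MP.
Variable R : realType.

Lemma trmx_mul_eq0 m k (N : 'M[R]_(m, k)) : N^T *m N = 0 -> N = 0.
Proof.
move=> H; apply/matrixP => i j; rewrite mxE.
have := congr1 (fun M : 'M[R]_k => M j j) H; rewrite !mxE => /eqP.
rewrite psumr_eq0; last by move=> l _; rewrite mxE -expr2 sqr_ge0.
move=> /allP /(_ i (mem_index_enum _)) /implyP /(_ isT).
by rewrite mxE -expr2 sqrf_eq0 => /eqP.
Qed.

Lemma ker2 p m (A : 'M[R]_p) (M : 'M[R]_(p, m)) :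
  A^T = A -> A *m (A *m M) = 0 -> A *m M = 0.
Proof.
move=> sA H; apply: trmx_mul_eq0.
by rewrite trmx_mul sA -mulmxA H mulmx0.
Qed.

Lemma horner_sym p' (A : 'M[R]_p'.+1) (q : {poly R}) :
  A^T = A -> (horner_mx A q)^T = horner_mx A q.
Proof.
move=> sA; elim/poly_ind: q => [|q c IH].
  by rewrite rmorph0 trmx0.
rewrite rmorphD rmorphM /= horner_mx_X horner_mx_C linearD /= tr_scalar_mx.
rewrite -!mulmxE trmx_mul IH sA.
by have -> := comm_mx_horner q (erefl (A *m A)) .
Qed.

Lemma pinv_poly p' (A : 'M[R]_p'.+1) : A^T = A -> forall h : {poly R},
  h != 0 -> A * horner_mx A h = 0 ->
  exists S : 'M[R]_p'.+1, [/\ S^T = S, A * S = S * A & A * A * S = A].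
Proof.
move=> sA; elim/poly_ind => [|q c IH]; first by rewrite eqxx.
move=> hnz.
have cAq : A * horner_mx A q = horner_mx A q * A.
  by have := comm_mx_horner q (erefl (A *m A)); rewrite /comm_mx !mulmxE.
have [c0|cnz] := eqVneq c 0.
  rewrite c0 polyC0 addr0 rmorphM /= horner_mx_X => H.
  have qnz : q != 0.
    by apply: contraNneq hnz => ->; rewrite c0 mul0r polyC0 addr0.
  apply: IH => //; rewrite -mulmxE; apply: ker2 => //.
  have cAq' : A *m horner_mx A q = horner_mx A q *m A := comm_mx_horner q (erefl (A *m A)).
  by rewrite cAq'; move: H; rewrite -!mulmxE.
rewrite rmorphD rmorphM /= horner_mx_X horner_mx_C.
rewrite -!mulmxE mulmxDr mul_mx_scalar => H.
have cAq' : A *m horner_mx A q = horner_mx A q *m A := comm_mx_horner q (erefl (A *m A)).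
have E : A *m A *m horner_mx A q = - (c *: A).
  by rewrite -mulmxA cAq'; apply/eqP; rewrite -addr_eq0 H.
exists (- c^-1 *: horner_mx A q); split.
- by rewrite linearZ /= horner_sym.
- by rewrite -scalemxAr -scalemxAl cAq'.
- rewrite -scalemxAr E.
  by rewrite scalerN scaleNr opprK scalerA mulVf // scale1r.
Qed.

Lemma MP_exists p (A : 'M[R]_p) : A^T = A -> exists B, is_MP_pinv A B.
Proof.
case: p A => [|p'] A sA.
  exists 0; split; apply/matrixP => i; case: i => //.
have [S [sS cS hS]] : exists S : 'M[R]_p'.+1, [/\ S^T = S, A * S = S * A & A * A * S = A].
  apply: (@pinv_poly p' A sA (char_poly A)).
    by apply: monic_neq0; apply: char_poly_monic.
  by rewrite Cayley_Hamilton mulr0.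
have ASA : A * S * A = A by rewrite -mulrA -cS mulrA.
have K : S * A * S * A = S * A by rewrite -!mulrA (mulrA A S A) ASA.
have AS : A * (S * A * S) = A * S by rewrite !mulrA ASA.
exists (S * A * S); split; rewrite !mulmxE.
- by rewrite !mulrA !ASA.
- by rewrite !mulrA !K.
- by rewrite AS -mulmxE trmx_mul sS sA mulmxE cS.
- by rewrite K -mulmxE trmx_mul sS sA mulmxE cS.
Qed.

End MP.
Set Implicit Arguments. Unset Strict Implicit.
Section Dual.
Variables (R : realType) (n p : nat) (X : 'M[R]_(n, p)) (y : 'cV[R]_n) (delta : R).

Definition dot m (a b : 'cV[R]_m) : R := \sum_(i < m) a i 0 * b i 0.

Lemma sqnormB m (a b : 'cV[R]_m) :
  sqnorm2 (a - b) = sqnorm2 a - 2 * dot a b + sqnorm2 b.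
Proof.
rewrite /sqnorm2 /dot mulr_sumr -sumrB -big_split /=.
by apply: eq_bigr => i _; rewrite !mxE; ring.
Qed.

Lemma dotBl m (a b c : 'cV[R]_m) : dot (a - b) c = dot a c - dot b c.
Proof.
rewrite /dot -sumrB; apply: eq_bigr => i _; rewrite !mxE; ring.
Qed.

Lemma dotX (u : 'cV[R]_p) (r : 'cV[R]_n) :
  dot (X *m u) r = \sum_(j < p) u j 0 * (X^T *m r) j 0.
Proof.
rewrite /dot.
under eq_bigr do rewrite mxE mulr_suml.
rewrite exchange_big /=; apply: eq_bigr => j _.
rewrite mxE mulr_sumr; apply: eq_bigr => i _; rewrite !mxE; ring.
Qed.

Definition Dj (s : 'rV[R]_p) j := delta * (1 - s 0 j ^+ 2).
Definition termj (s : 'rV[R]_p) (u c : 'cV[R]_p) j :=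
  Dj s j * u j 0 ^+ 2 / s 0 j ^+ 2 + s 0 j ^+ 2 * c j 0 ^+ 2 / Dj s j.
Definition Pval (s : 'rV[R]_p) (u : 'cV[R]_p) :=
  sqnorm2 (y - X *m u) + \sum_(j < p) Dj s j * u j 0 ^+ 2 / s 0 j ^+ 2.
Definition Dval (s : 'rV[R]_p) (r : 'cV[R]_n) :=
  2 * dot y r - sqnorm2 r
  - \sum_(j < p) s 0 j ^+ 2 * (X^T *m r) j 0 ^+ 2 / Dj s j.

Lemma dual_id (s : 'rV[R]_p) (u : 'cV[R]_p) (r : 'cV[R]_n) :
  Pval s u - Dval s r - sqnorm2 (y - X *m u - r) =
  \sum_(j < p) (termj s u (X^T *m r) j - 2 * (u j 0 * (X^T *m r) j 0)).
Proof.
rewrite /Pval /Dval sqnormB dotBl dotX sumrB big_split /= -mulr_sumr.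
rewrite /termj; ring.
Qed.

Lemma termj_ge (s : 'rV[R]_p) (u c : 'cV[R]_p) j : 0 < delta -> 0 <= s 0 j < 1 -> (s 0 j = 0 -> u j 0 = 0) ->
  2 * (u j 0 * c j 0) <= termj s u c j.
Proof.
move=> dp /andP [s0 s1] hz; rewrite /termj.
have Dp : 0 < Dj s j.
  rewrite /Dj mulr_gt0 // subr_gt0 expr2.
  by apply: (le_lt_trans (ler_piMl s0 (ltW s1))).
have [sz|snz] := eqVneq (s 0 j) 0.
  by rewrite hz // sz !expr2 !(mul0r, mulr0, invr0, addr0).
set S := s 0 j ^+ 2; set D := Dj s j; set a := u j 0; set b := c j 0.
have Sp : 0 < S by rewrite /S exprn_gt0 // lt_def snz.
rewrite -subr_ge0.
have -> : D * a ^+ 2 / S + S * b ^+ 2 / D - 2 * (a * b) = (D * a - S * b) ^+ 2 / (D * S).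
  by field; rewrite ?gt_eqF.
by rewrite divr_ge0 ?sqr_ge0 // mulr_ge0 // ltW.
Qed.

Lemma weak_dual (s : 'rV[R]_p) (u : 'cV[R]_p) (r : 'cV[R]_n) : 0 < delta -> (forall j, 0 <= s 0 j < 1) ->
  (forall j, s 0 j = 0 -> u j 0 = 0) ->
  sqnorm2 (y - X *m u - r) <= Pval s u - Dval s r.
Proof.
move=> dp hs hz; rewrite -subr_ge0 dual_id sumr_ge0 // => j _.
by rewrite subr_ge0; apply: termj_ge => //; apply: hz.
Qed.

Lemma termj_eq (s : 'rV[R]_p) (u c : 'cV[R]_p) j : 0 < delta -> 0 <= s 0 j <= 1 ->
  Dj s j * u j 0 = s 0 j ^+ 2 * c j 0 ->
  termj s u c j = 2 * (u j 0 * c j 0).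
Proof.
move=> dp /andP [s0 s1] E; rewrite /termj.
have [sz|snz] := eqVneq (s 0 j) 0.
  move: E; rewrite /Dj sz expr0n /= subr0 mulr1 mul0r => /eqP.
  by rewrite mulf_eq0 gt_eqF //= => /eqP ->; rewrite !expr2 !(mul0r, mulr0, invr0, addr0, add0r).
have [Dz|Dnz] := eqVneq (Dj s j) 0.
  move: E; rewrite Dz mul0r => /esym /eqP; rewrite mulf_eq0 expf_eq0 (negPf snz) andbF /=.
  by move=> /eqP ->; rewrite invr0 !mulr0 !mul0r addr0.
have Snz : s 0 j ^+ 2 != 0 by rewrite expf_eq0 (negPf snz) andbF.
have -> : c j 0 = Dj s j * u j 0 / s 0 j ^+ 2 by rewrite E mulrC mulKf.
by field; rewrite snz Dnz.
Qed.

Lemma strong_dual (s : 'rV[R]_p) (u : 'cV[R]_p) : 0 < delta -> (forall j, 0 <= s 0 j <= 1) ->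
  (forall j, Dj s j * u j 0 = s 0 j ^+ 2 * (X^T *m (y - X *m u)) j 0) ->
  Pval s u = Dval s (y - X *m u).
Proof.
move=> dp hs E; apply/eqP; rewrite -subr_eq0.
have := dual_id s u (y - X *m u); rewrite subrr.
have -> : sqnorm2 (0 : 'cV[R]_n) = 0 by rewrite /sqnorm2 big1 // => i _; rewrite mxE expr0n.
rewrite subr0 => ->.
by rewrite big1 // => j _; rewrite termj_eq // subrr.
Qed.

End Dual.

Section Fact.
Variables (R : realType) (n p : nat) (X : 'M[R]_(n, p)) (y : 'cV[R]_n) (delta : R).
Hypotheses (hn : (0 < n)%N) (hd : 0 < delta).

Lemma NN_eq (t : 'rV[R]_p) : (forall j, 0 <= t 0 j <= 1) ->
  let d := \row_j Num.sqrt (delta * (1 - t 0 j ^+ 2)) in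
  (Xt X t)^T *m Xt X t + delta *: (1%:M - Tmat t *m Tmat t) =
  (col_mx (Xt X t) (diag_mx d))^T *m col_mx (Xt X t) (diag_mx d).
Proof.
move=> ht d; rewrite tr_col_mx mul_row_col tr_diag_mx; congr (_ + _).
apply/matrixP => i j; rewrite /Tmat !mul_diag_mx !mxE.
case: (i == j); last by rewrite !mulr0n !mulr0 subr0 mulr0.
  rewrite !mulr1n -expr2 sqr_sqrtr //.
  have /andP [t0 t1] := ht i.
  apply: mulr_ge0; first exact: ltW.
  rewrite subr_ge0 expr2; exact: le_trans (ler_piMl t0 t1) t1.
Qed.

Lemma Lt_fact (t : 'rV[R]_p) : (forall j, 0 <= t 0 j <= 1) ->
  Lt X delta t *m (MP_pinv (Lt X delta t) *m ((n%:R)^-1 *: ((Xt X t)^T *m y)))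
  = (n%:R)^-1 *: ((Xt X t)^T *m y).
Proof.
move=> ht.
set L := Lt X delta t; set c0 := (n%:R)^-1 *: _.
set N := col_mx (Xt X t) (diag_mx (\row_j Num.sqrt (delta * (1 - t 0 j ^+ 2)))).
have LN : L = (n%:R)^-1 *: (N^T *m N) by rewrite /L /Lt NN_eq.
have ninz : (n%:R : R)^-1 != 0 by rewrite invr_eq0 pnatr_eq0 -lt0n.
have sL : L^T = L by rewrite LN linearZ /= trmx_mul trmxK.
have ker : forall w : 'cV[R]_p, L *m w = 0 -> Xt X t *m w = 0.
  move=> w; rewrite LN -scalemxAl => /eqP; rewrite scaler_eq0 (negPf ninz) /= => /eqP H.
  have : N *m w = 0.
    apply: trmx_mul_eq0; by rewrite trmx_mul -mulmxA (mulmxA N^T) H mulmx0.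
  by rewrite /N mul_col_mx => /eqP; rewrite col_mx_eq0 => /andP [/eqP -> _].
have [h1 h2 h3 h4] : is_MP_pinv L (MP_pinv L) := xgetPex 0 (@MP_exists R p L sL).
set B := MP_pinv L.
set w := c0 - L *m (B *m c0).
have wL : w^T *m L = 0.
  rewrite /w linearB /= mulmxBl trmx_mul trmx_mul -mulmxA -mulmxA.
  by rewrite -trmx_mul h3 h1 subrr.
have Lw : L *m w = 0.
  by apply: trmx_inj; rewrite trmx_mul sL wL trmx0.
have Xw := ker w Lw.
have wc : w^T *m c0 = 0.
  rewrite /c0 -scalemxAr mulmxA -trmx_mul Xw trmx0 mul0mx scaler0 //.
have ww : w^T *m w = 0.
  by rewrite {2}/w mulmxBr wc (mulmxA w^T L) wL mul0mx subrr.
have := @trmx_mul_eq0 R _ _ w ww; rewrite /w => /eqP; rewrite subr_eq0 => /eqP E; exact/esym/E.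
Qed.
End Fact.

Section Fact2.
Variables (R : realType) (n p : nat) (X : 'M[R]_(n, p)) (y : 'cV[R]_n) (delta : R).
Hypotheses (hn : (0 < n)%N) (hd : 0 < delta).

Lemma F_rel (t : 'rV[R]_p) : (forall j, 0 <= t 0 j <= 1) ->
  forall j, Dj delta t j * (Tmat t *m beta_t X y delta t) j 0 =
    t 0 j ^+ 2 * (X^T *m (y - X *m (Tmat t *m beta_t X y delta t))) j 0.
Proof.
move=> ht j.
have E := Lt_fact X y hn hd ht.
rewrite -/(beta_t X y delta t) in E.
set b := beta_t X y delta t in E *; clearbody b.
have ninz : (n%:R : R) != 0 by rewrite pnatr_eq0 -lt0n.
move: E; rewrite /Lt -scalemxAl => /(congr1 (fun M => n%:R *: M)).
rewrite !scalerA mulfV // !scale1r mulmxDl => E.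
have E2 : delta *: (1%:M - Tmat t *m Tmat t) *m b = Tmat t *m (X^T *m (y - X *m (Tmat t *m b))).
  have XtT : (Xt X t)^T = Tmat t *m X^T by rewrite /Xt trmx_mul /Tmat tr_diag_mx.
  rewrite mulmxBr mulmxBr (mulmxA X (Tmat t) b) -/(Xt X t) !mulmxA -XtT -E addrAC.
  have XtE : (Xt X t)^T *m X *m Tmat t = (Xt X t)^T *m Xt X t by rewrite -mulmxA.
  by rewrite XtE subrr add0r.
move: E2; rewrite -scalemxAl mulmxBl mul1mx -mulmxA => E2.
have := congr1 (fun M : 'cV[R]_p => t 0 j * M j 0) E2.
rewrite /= /Tmat !mul_diag_mx !mxE /Dj => E3.
have aux : forall a b c d : R, a * (d * (b - a * (a * b))) = a * (a * c) -> d * (1 - a ^+ 2) * (a * b) = a ^+ 2 * c.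
  by move=> a b0 c d h; transitivity (a * (a * c)); [rewrite -h; ring | ring].
exact: aux E3.
Qed.
End Fact2.
Section An.
Variable R : realType.

Lemma cvg_sum_ord (k : nat) (F : 'I_k -> nat -> R) (a : 'I_k -> R) :
  (forall i, F i l @[l --> \oo] --> a i) ->
  \sum_(i < k) F i l @[l --> \oo] --> \sum_(i < k) a i.
Proof.
move=> h; apply: cvg_big => //; exact: add_continuous.
Qed.

Lemma cvg_sq (x : nat -> R) (a : R) : x l @[l --> \oo] --> a ->
  x l ^+ 2 @[l --> \oo] --> a ^+ 2.
Proof.
move=> h; rewrite expr2; under eq_fun do rewrite expr2; exact: cvgM.
Qed.

Lemma sq_cvg0 (x : nat -> R) : x l ^+ 2 @[l --> \oo] --> 0 -> x l @[l --> \oo] --> 0.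
Proof.
move=> h; apply/cvgr0Pnorm_lt => e e0.
move/cvgr0Pnorm_lt : h => /(_ (e * e) (mulr_gt0 e0 e0)) H.
near=> l. have : `|x l ^+ 2| < e * e by near: l; exact: H.
by rewrite normrX -expr2 ltr_pXn2r // nnegrE ?normr_ge0 // ltW.
Unshelve. all: by end_near. Qed.

End An.

Unset Implicit Arguments.
Set Strict Implicit.

Theorem theorem3 (R : realType) (n p : nat) (hn : (0 < n)%N) (hp : (0 < p)%N)
  (X : 'M[R]_(n, p)) (y : 'cV[R]_n) (delta lambda : R)
  (hdelta : 0 < delta) (hlambda : 0 < lambda)
  (tseq : nat -> 'rV[R]_p) (t : 'rV[R]_p) :
  (forall l (j : 'I_p), 0 <= tseq l 0 j < 1) ->
  (forall j : 'I_p, 0 <= t 0 j <= 1) ->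
  tseq @ \oo --> t ->
  (fun l => f_lambda X y delta lambda (tseq l)) @ \oo
    --> f_lambda X y delta lambda t.
Proof.
move=> hts ht hcvg.
have cj : forall j, tseq l 0 j @[l --> \oo] --> t 0 j.
  move=> j.
  exact: (continuous_cvg _ (@coord_continuous R 1 p 0 j t) hcvg).
have ht1 : forall l j, 0 <= tseq l 0 j <= 1.
  by move=> l j; have /andP [a b] := hts l j; rewrite a ltW.
set b := beta_t X y delta t.
set u := Tmat t *m b.
set r := y - X *m u.
set c := X^T *m r.
have Ft : forall j, Dj delta t j * u j 0 = t 0 j ^+ 2 * c j 0 := F_rel X y hn hdelta ht.
pose us l := Tmat (tseq l) *m beta_t X y delta (tseq l).
pose g l := Pval X y delta (tseq l) u - Dval X y delta (tseq l) r.
have ev : \forall l \near \oo, forall j, tseq l 0 j = 0 -> u j 0 = 0.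
  apply: filter_forall => j.
  have [t0|tnz] := eqVneq (t 0 j) 0.
    apply: nearW => l _; by rewrite /u /Tmat mul_diag_mx mxE t0 mul0r.
  have H := cvgr_neq0 _ (cj j) tnz.
  near=> l => h0.
  have : tseq l 0 j != 0 by near: l; exact: H.
  by rewrite h0 eqxx.
have bound : \forall l \near \oo,
    0 <= sqnorm2 (y - X *m us l - r) <= g l.
  near=> l.
  have Fs := F_rel X y hn hdelta (ht1 l).
  have sq0 : forall m (v : 'cV[R]_m), 0 <= sqnorm2 v.
    by move=> m v; apply: sumr_ge0 => i _; apply: sqr_ge0.
  rewrite sq0 /=.
  have hz1 : forall j, tseq l 0 j = 0 -> us l j 0 = 0.
    by move=> j h; rewrite /us /Tmat mul_diag_mx mxE h mul0r.
  have hz2 : forall j, tseq l 0 j = 0 -> u j 0 = 0 by near: l; exact: ev.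
  have w1 := weak_dual X y r hdelta (hts l) hz1.
  have sd := strong_dual hdelta (ht1 l) Fs.
  have w2 := weak_dual X y (y - X *m us l) hdelta (hts l) hz2.
  have sd' : Pval X y delta (tseq l) (us l) = Dval X y delta (tseq l) (y - X *m us l) := sd.
  apply: (le_trans w1); rewrite /g lerD2r sd' -subr_ge0.
  exact: le_trans (sq0 _ _) w2.
have cD : forall j, Dj delta (tseq l) j @[l --> \oo] --> Dj delta t j.
  move=> j; rewrite /Dj; apply: cvgMr; apply: cvgB; first exact: cvg_cst.
  exact: cvg_sq.
have gcvg : g l @[l --> \oo] --> 0.
  have -> : 0 = Pval X y delta t u - Dval X y delta t r.
    by rewrite (strong_dual hdelta ht Ft) subrr.
  rewrite /g /Pval /Dval.
  apply: cvgB; [apply: cvgD | apply: cvgB]; try exact: cvg_cst;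
    apply: cvg_sum_ord => j.
  - have [t0|tnz] := eqVneq (t 0 j) 0.
      have u0 : u j 0 = 0 by rewrite /u /Tmat mul_diag_mx mxE t0 mul0r.
      rewrite u0; under eq_fun do rewrite [0 ^+ 2]expr2 !mulr0 mul0r.
      rewrite [0 ^+ 2]expr2 !mulr0 mul0r; exact: cvg_cst.
    apply: cvgM; first by apply: cvgMl; exact: cD.
    by apply: cvgV; [rewrite expf_neq0 | exact: cvg_sq].
  - have [t1|tn1] := eqVneq (t 0 j) 1.
      have c0 : (X^T *m r) j 0 = 0.
        have := Ft j; rewrite /Dj t1 expr1n subrr mulr0 mul0r mul1r => h.
        exact: (esym h).
      rewrite c0; under eq_fun do rewrite [0 ^+ 2]expr2 !mulr0 mul0r.
      rewrite [0 ^+ 2]expr2 !mulr0 mul0r; exact: cvg_cst.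
    have /andP [tj0 tj1] := ht j.
    have tlt : t 0 j < 1 by rewrite lt_neqAle tn1.
    have t2lt : t 0 j ^+ 2 < 1.
      by rewrite expr2; apply: le_lt_trans (ler_piMl tj0 tj1) tlt.
    have Dnz : Dj delta t j != 0.
      apply: mulf_neq0; [by rewrite gt_eqF | by rewrite subr_eq0 eq_sym lt_eqF].
    apply: cvgM; first by apply: cvgMl; exact: cvg_sq.
    by apply: cvgV => //; exact: cD.
have e0 : sqnorm2 (y - X *m us l - r) @[l --> \oo] --> 0.
  exact: (squeeze_cvgr bound (cvg_cst 0) gcvg).
have coord : forall i, (y - X *m us l) i 0 @[l --> \oo] --> r i 0.
  move=> i.
  have di : (y - X *m us l - r) i 0 @[l --> \oo] --> 0.
    apply: sq_cvg0; apply: (squeeze_cvgr _ (cvg_cst 0) e0).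
    apply: nearW => l; rewrite sqr_ge0 /= /sqnorm2 (bigD1 i) //= lerDl.
    by apply: sumr_ge0 => k _; apply: sqr_ge0.
  have mxB : forall (v w : 'cV[R]_n), (v - w) i 0 = v i 0 - w i 0 by move=> v w; rewrite !mxE.
  have E : (fun l => (y - X *m us l) i 0) = (fun l => (y - X *m us l - r) i 0 + r i 0).
    by apply: funext => l; rewrite mxB subrK.
  rewrite E -[X in _ --> X]add0r; apply: cvgD => //; exact: cvg_cst.
have nrm : sqnorm2 (y - X *m us l) @[l --> \oo] --> sqnorm2 r.
  by rewrite /sqnorm2; apply: cvg_sum_ord => i; apply: cvg_sq.
rewrite /f_lambda /Xt.
under eq_fun do rewrite -mulmxA.
rewrite -mulmxA.
apply: cvgD; apply: cvgMr; first exact: nrm.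
by apply: cvg_sum_ord.
Unshelve. all: by end_near.
Qed.
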